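(* Suppose Assumption 1 holds and let $0<\delta<1$. Let $J\subseteq\{1,\dots,q\}$ with $|J|\le q^*$ and $J_0\setminus J\neq\emptyset$, and let $v=\sum_{j\in J_0}v_j$ with $v_j\in V_j$ for $j\in J_0$. On the event $\mathcal E_{\delta,J\cup J_0}$, $$\|\hat\Pi_{J_0}v\|_n^2-\|\hat\Pi_Jv\|_n^2=\|v-\hat\Pi_Jv\|_n^2\ge\frac{1-\delta}{1+\delta}(1-\rho_{q^*}^2)\Big\|\sum_{j\in J_0\setminus J}v_j\Big\|_n^2.$$
   Context: Let $q\ge1$ and let $(Y,X)$ be a pair of random variables with $X=(X_1,\dots,X_q)^T$, each $X_j$ real-valued, and $Y=\sum_{j=1}^q f_j(X_j)+\epsilon$, where $f_j\in L^2(\mathbb P^{X_j})$, $\mathbb E[f_j(X_j)]=0$ for $j=1,\dots,q-1$, and $\epsilon$ is a centered Gaussian variable with variance $\sigma^2$, independent of $X$. The space $L^2(\mathbb P^X)$ carries the inner product $\langle g,h\rangle=\mathbb E[g(X)h(X)]$ and norm $\|g\|=\langle g,g\rangle^{1/2}$. Let $H_q=L^2(\mathbb P^{X_q})$ and $H_j=\{h\in L^2(\mathbb P^{X_j}):\mathbb E[h(X_j)]=0\}$ for $j<q$, viewed as subspaces of $L^2(\mathbb P^X)$ via $x\mapsto h(x_j)$; for $J\subseteq\{1,\dots,q\}$ let $H_J=\sum_{j\in J}H_j$ (with $H_\emptyset=\{0\}$). Let $J_0=\{j:\|f_j\|>0\}$, $s=|J_0|$, and let $q^*$ be an integer with $s\le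 q^*$. Let $\rho_{q^*}$ be the supremum of $\langle h_1,h_2\rangle/(\|h_1\|\|h_2\|)$ over all nonzero $h_1\in H_{J_1}$, $h_2\in H_{J_2}$ and all $J_1,J_2\subseteq\{1,\dots,q\}$ with $J_1\cap J_2=\emptyset$ and $|J_1|,|J_2|\le q^*$. Assumption 1 is the condition $\rho_{q^*}<1$. For each $j$, $V_j\subseteq H_j$ is a finite-dimensional linear subspace and $V_J=\sum_{j\in J}V_j$. $X^1,\dots,X^n$ are independent copies of $X$. The empirical norm is $\|h\|_n^2=\frac1n\sum_{i=1}^nh(X^i)^2$ for functions and $\|u\|_n^2=\frac1n\|u\|_2^2$ for $u\in\mathbb R^n$. $\hat\Pi_J$ is the orthogonal projection of $\mathbb R^n$ onto $\{(g(X^1),\dots,g(X^n))^T:g\in V_J\}$, and for a function $h$ we write $\hat\Pi_Jh=\hat\Pi_J(h(X^1),\dots,h(X^n))^T$. For $0<\delta<1$ and $J\subseteq\{1,\dots,q\}$, $\mathcal E_{\delta,J}$ is the event that $(1-\delta)\|g\|^2\le\|g\|_n^2\le(1+\delta)\|g\|^2$ for all $g\in V_J$. *)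

(* Defs.v *)
From Stdlib Require Import Reals Lra List ClassicalEpsilon.
Import ListNotations.
Open Scope R_scope.

(* A point x = (x_0, ..., x_{q-1}) of R^q (coordinates are indexed 0..q-1;
   coordinates >= q are irrelevant). Index j here corresponds to j+1 in the paper. *)
Definition Pt := nat -> R.
Definition Fn := Pt -> R.

Definition sumR (l : list nat) (f : nat -> R) : R :=
  fold_right (fun j acc => f j + acc) 0 l.

Definition fsum (J : list nat) (hs : nat -> Fn) : Fn :=
  fun x => sumR J (fun j => hs j x).

Definition idx_set (q : nat) (J : list nat) : Prop :=
  NoDup J /\ forall j, In j J -> (j < q)%nat.

Definition setdiff (J1 J2 : list nat) : list nat :=
  filter (fun j => negb (existsb (Nat.eqb j) J2)) J1.

Definition HJ (H : nat -> Fn -> Prop) (J : list nat) (h : Fn) : Prop :=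
  exists hs : nat -> Fn, (forall j, In j J -> H j (hs j)) /\
                         forall x, h x = fsum J hs x.

Definition subspace (S : Fn -> Prop) : Prop :=
  S (fun _ => 0) /\
  (forall g h, S g -> S h -> S (fun x => g x + h x)) /\
  (forall (a : R) g, S g -> S (fun x => a * g x)).

Definition fin_dim (S : Fn -> Prop) : Prop :=
  exists B : list Fn, (forall b, In b B -> S b) /\
    forall g, S g -> exists c : nat -> R, forall x,
      g x = sumR (seq 0 (length B)) (fun k => c k * nth k B (fun _ => 0) x).

(* ip is a symmetric, bilinear, positive semidefinite form on A
   (the abstract population inner product <g,h> = E[g(X) h(X)]) *)
Definition inner_on (A : Fn -> Prop) (ip : Fn -> Fn -> R) : Prop :=
  (forall g h, A g -> A h -> ip g h = ip h g) /\
  (forall g h k, A g -> A h -> A k ->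
     ip (fun x => g x + h x) k = ip g k + ip h k) /\
  (forall (a : R) g h, A g -> A h -> ip (fun x => a * g x) h = a * ip g h) /\
  (forall g, A g -> 0 <= ip g g).

(* the set of correlations whose supremum is rho_{q*} *)
Definition corr_set (q qstar : nat) (H : nat -> Fn -> Prop) (ip : Fn -> Fn -> R)
  : R -> Prop := fun r =>
  exists J1 J2 h1 h2,
    idx_set q J1 /\ idx_set q J2 /\ (forall j, In j J1 -> ~ In j J2) /\
    (length J1 <= qstar)%nat /\ (length J2 <= qstar)%nat /\
    HJ H J1 h1 /\ HJ H J2 h2 /\ 0 < ip h1 h1 /\ 0 < ip h2 h2 /\
    r = ip h1 h2 / (sqrt (ip h1 h1) * sqrt (ip h2 h2)).

Definition J0set (q : nat) (ip : Fn -> Fn -> R) (f : nat -> Fn) : list nat :=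
  filter (fun j => if Rlt_dec 0 (ip (f j) (f j)) then true else false) (seq 0 q).

(* empirical norms; samples X^1..X^n are xs 0 .. xs (n-1); vectors of R^n are
   nat -> R with only indices < n relevant *)
Definition emp_norm2_fn (n : nat) (xs : nat -> Pt) (g : Fn) : R :=
  / INR n * sumR (seq 0 n) (fun i => (g (xs i)) ^ 2).
Definition emp_norm2_vec (n : nat) (u : nat -> R) : R :=
  / INR n * sumR (seq 0 n) (fun i => (u i) ^ 2).

Definition eval_vec (xs : nat -> Pt) (g : Fn) : nat -> R := fun i => g (xs i).

Definition SJ (n : nat) (xs : nat -> Pt) (V : nat -> Fn -> Prop) (J : list nat)
  (w : nat -> R) : Prop :=
  exists g, HJ V J g /\ forall i, (i < n)%nat -> w i = g (xs i).

Definition is_orth_proj (n : nat) (S : (nat -> R) -> Prop) (u p : nat -> R) : Prop :=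
  S p /\ forall w, S w -> sumR (seq 0 n) (fun i => (u i - p i) * w i) = 0.

(* orthogonal projection of R^n onto S (chosen by epsilon; it exists and is unique
   on the coordinates < n for the linear subspaces used below) *)
Definition proj (n : nat) (S : (nat -> R) -> Prop) (u : nat -> R) : nat -> R :=
  epsilon (inhabits (fun _ : nat => 0)) (fun p => is_orth_proj n S u p).

Definition PiHat (n : nat) (xs : nat -> Pt) (V : nat -> Fn -> Prop) (J : list nat)
  (u : nat -> R) : nat -> R := proj n (SJ n xs V J) u.

Definition event (n : nat) (xs : nat -> Pt) (ip : Fn -> Fn -> R)
  (V : nat -> Fn -> Prop) (J : list nat) (delta : R) : Prop :=
  forall g, HJ V J g ->
    (1 - delta) * ip g g <= emp_norm2_fn n xs g /\
    emp_norm2_fn n xs g <= (1 + delta) * ip g g.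

(* Main.v *)
Require Import Defs.
From Stdlib Require Import Reals List Lra Lia Psatz Classical FunctionalExtensionality ClassicalEpsilon Permutation.
Import ListNotations.
Open Scope R_scope.

Notation mem j l := (existsb (Nat.eqb j) l).

Lemma mem_In j l : mem j l = true <-> In j l.
Proof.
  rewrite existsb_exists; split.
  - intros [x [Hx E]]; apply Nat.eqb_eq in E; subst; auto.
  - intros H; exists j; split; auto; apply Nat.eqb_refl.
Qed.

Lemma mem_notIn j l : mem j l = false <-> ~ In j l.
  rewrite <- mem_In. destruct (mem j l); split; intros; try congruence; auto; exfalso; auto.


Qed.

Lemma sumR_nil f : sumR [] f = 0. Proof. reflexivity. Qed.
Lemma sumR_cons a l f : sumR (a::l) f = f a + sumR l f. Proof. reflexivity. Qed.

Lemma sumR_ext l f g : (forall j, In j l -> f j = g j) -> sumR l f = sumR l g.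
Proof.
  induction l as [|a l IH]; intros H; [reflexivity|].
  rewrite !sumR_cons, H by (left; auto). rewrite IH; auto.
  intros; apply H; right; auto.
Qed.

Lemma sumR_0 l : sumR l (fun _ => 0) = 0.
Proof. induction l as [|a l IH]; [reflexivity|]. rewrite sumR_cons, IH; ring. Qed.

Lemma sumR_plus l f g : sumR l (fun i => f i + g i) = sumR l f + sumR l g.
Proof. induction l as [|a l IH]; [simpl; ring|]. rewrite !sumR_cons, IH; ring. Qed.

Lemma sumR_minus l f g : sumR l (fun i => f i - g i) = sumR l f - sumR l g.
Proof. induction l as [|a l IH]; [simpl; ring|]. rewrite !sumR_cons, IH; ring. Qed.

Lemma sumR_scal l a f : sumR l (fun i => a * f i) = a * sumR l f.
Proof. induction l as [|b l IH]; [simpl; ring|]. rewrite !sumR_cons, IH; ring. Qed.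

Lemma sumR_app l1 l2 f : sumR (l1 ++ l2) f = sumR l1 f + sumR l2 f.
Proof. induction l1 as [|a l IH]; [simpl; ring|]. rewrite <- app_comm_cons, !sumR_cons, IH; ring. Qed.

Lemma sumR_filter P l f : sumR (filter P l) f = sumR l (fun j => if P j then f j else 0).
Proof.
  induction l as [|a l IH]; [reflexivity|]. cbn [filter].
  destruct (P a) eqn:E; rewrite ?sumR_cons, IH, E; ring.
Qed.

Lemma sumR_perm l l' f : Permutation l l' -> sumR l f = sumR l' f.
Proof.
  induction 1; rewrite ?sumR_cons; try lra.
Qed.

Lemma sumR_swap A B f : NoDup A -> NoDup B ->
  sumR A (fun j => if mem j B then f j else 0) = sumR B (fun j => if mem j A then f j else 0).
Proof.
  intros HA HB. rewrite <- !sumR_filter. apply sumR_perm.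
  apply NoDup_Permutation; try apply NoDup_filter; auto.
  intros x; rewrite !filter_In, !mem_In; tauto.
Qed.

Lemma sumR_nonneg l f : (forall i, In i l -> 0 <= f i) -> 0 <= sumR l f.
Proof.
  induction l as [|a l IH]; intros H; [simpl; lra|]. rewrite sumR_cons.
  assert (0 <= f a) by (apply H; left; auto).
  assert (0 <= sumR l f) by (apply IH; intros; apply H; right; auto). lra.
Qed.

Lemma sumR_ge_term l f m : (forall i, In i l -> 0 <= f i) -> In m l -> f m <= sumR l f.
Proof.
  induction l as [|a l IH]; intros H Hm; [destruct Hm|]. rewrite sumR_cons.
  assert (0 <= f a) by (apply H; left; auto).
  assert (0 <= sumR l f) by (apply sumR_nonneg; intros; apply H; right; auto).
  destruct Hm as [<-|Hm]; [lra|].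
  assert (f m <= sumR l f) by (apply IH; auto; intros; apply H; right; auto). lra.
Qed.

Lemma sumR_sq_zero l f : sumR l (fun i => f i * f i) = 0 -> forall i, In i l -> f i = 0.
Proof.
  intros H i Hi.
  assert (f i * f i <= 0).
  { rewrite <- H. apply (sumR_ge_term l (fun i => f i * f i)); auto. intros; nra. }
  nra.
Qed.

Lemma sub_minus (S : Fn -> Prop) g h : subspace S -> S g -> S h -> S (fun x => g x - h x).
Proof.
  intros [H0 [Hp Hs]] Hg Hh.
  replace (fun x => g x - h x) with (fun x => g x + (fun x => -1 * h x) x)
    by (extensionality x; ring).
  apply Hp; auto.
Qed.

Lemma HJ_subspace V A : (forall j, In j A -> subspace (V j)) -> subspace (HJ V A).
Proof.
  intros HV. split; [|split].
  - exists (fun _ _ => 0). split.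
    + intros j Hj; apply (HV j Hj).
    + intros x; unfold fsum; rewrite sumR_0; auto.
  - intros g h [gs [Hg Eg]] [hs [Hh Eh]].
    exists (fun j x => gs j x + hs j x). split.
    + intros j Hj; apply (HV j Hj); auto.
    + intros x; unfold fsum in *; rewrite sumR_plus, Eg, Eh; auto.
  - intros a g [gs [Hg Eg]].
    exists (fun j x => a * gs j x). split.
    + intros j Hj; apply (HV j Hj); auto.
    + intros x; unfold fsum in *; rewrite sumR_scal, Eg; auto.
Qed.

Lemma HJ_mono V H A h : (forall j, In j A -> forall g, V j g -> H j g) -> HJ V A h -> HJ H A h.
Proof. intros HVH [hs [Hh E]]; exists hs; split; auto. Qed.

Lemma HJ_lift H q A h : (forall j, (j < q)%nat -> subspace (H j)) ->
  NoDup A -> (forall j, In j A -> (j < q)%nat) -> HJ H A h -> HJ H (seq 0 q) h.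
Proof.
  intros HS HA HAq [hs [Hh E]].
  exists (fun j => if mem j A then hs j else (fun _ => 0)). split.
  - intros j Hj. apply in_seq in Hj. destruct (mem j A) eqn:Em.
    + apply Hh, mem_In; auto.
    + apply (HS j); lia.
  - intros x. rewrite E. unfold fsum.
    rewrite (sumR_ext (seq 0 q) _ (fun j => if mem j A then hs j x else 0))
      by (intros j _; destruct (mem j A); auto).
    rewrite <- sumR_swap by (auto; apply seq_NoDup).
    apply sumR_ext. intros j Hj.
    assert (mem j (seq 0 q) = true) as -> by (apply mem_In, in_seq; specialize (HAq j Hj); lia).
    auto.
Qed.

Definition vsub (S : (nat -> R) -> Prop) : Prop :=
  S (fun _ => 0) /\ (forall g h, S g -> S h -> S (fun i => g i + h i)) /\
  (forall a g, S g -> S (fun i => a * g i)).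

Lemma vsub_comb S g h a : vsub S -> S g -> S h -> S (fun i => g i + a * h i).
Proof. intros [H0 [Hp Hs]] Hg Hh. apply (Hp g (fun i => a * h i)); auto. Qed.

Lemma vsub_minus S g h : vsub S -> S g -> S h -> S (fun i => g i - h i).
Proof.
  intros HS Hg Hh. replace (fun i => g i - h i) with (fun i => g i + -1 * h i)
    by (extensionality x; ring). apply vsub_comb; auto.
Qed.

Lemma proj_ex_aux n : forall m S, vsub S ->
  (forall w, S w -> forall i, (m <= i < n)%nat -> w i = 0) ->
  forall u, exists p, is_orth_proj n S u p.
Proof.
  induction m as [|m IHm]; intros S HS Hv u.
  - exists (fun _ => 0). split; [apply HS|]. intros w Hw.
    rewrite (sumR_ext _ _ (fun _ => 0)); [apply sumR_0|].
    intros i Hi; apply in_seq in Hi. rewrite (Hv w Hw i) by lia. ring.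
  - destruct (Compare_dec.le_lt_dec n m) as [Hnm|Hmn].
    + apply IHm; auto. intros w Hw i Hi; lia.
    + pose (S' := fun w => S w /\ w m = 0).
      assert (HS' : vsub S').
      { destruct HS as [H0 [Hp Hs]]. split; [|split].
        - split; auto.
        - intros g h [Hg Eg] [Hh Eh]; split; auto. rewrite Eg, Eh; ring.
        - intros a g [Hg Eg]; split; auto. rewrite Eg; ring. }
      assert (Hv' : forall w, S' w -> forall i, (m <= i < n)%nat -> w i = 0).
      { intros w [Hw Hm] i Hi. destruct (Nat.eq_dec i m); [subst; auto|].
        apply (Hv w Hw); lia. }
      destruct (classic (exists s, S s /\ s m <> 0)) as [[s [Hs Hsm]]|Hno].
      * destruct (IHm S' HS' Hv' s) as [ps [[Hps Hpsm] Hps_o]].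
        destruct (IHm S' HS' Hv' u) as [pu [[Hpu Hpum] Hpu_o]].
        assert (Hr : S (fun i => s i - ps i)) by (apply vsub_minus; auto).
        assert (Hrm : s m - ps m <> 0) by (rewrite Hpsm; lra).
        assert (Hrr : 0 < sumR (seq 0 n) (fun i => (s i - ps i) * (s i - ps i))).
        { assert (Hge := sumR_ge_term (seq 0 n) (fun i => (s i - ps i) * (s i - ps i)) m).
          assert (0 < (s m - ps m) * (s m - ps m)) by (change (0 < Rsqr (s m - ps m)); apply Rlt_0_sqr; auto).
          assert (In m (seq 0 n)) by (apply in_seq; lia).
          assert (forall i, In i (seq 0 n) -> 0 <= (s i - ps i) * (s i - ps i)) by (intros; apply Rle_0_sqr).
          specialize (Hge H1 H0). simpl in Hge. lra. }
        pose (rr := sumR (seq 0 n) (fun i => (s i - ps i) * (s i - ps i))).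
        pose (c := sumR (seq 0 n) (fun i => (u i - pu i) * (s i - ps i)) / rr).
        exists (fun i => pu i + c * (s i - ps i)). split.
        { apply (vsub_comb S pu (fun i => s i - ps i)); auto. }
        intros w Hw.
        pose (t := w m / (s m - ps m)).
        assert (Hw' : S' (fun i => w i - t * (s i - ps i))).
        { split.
          - apply (vsub_comb S w (fun i => s i - ps i) (-t)) in Hr; auto.
            replace (fun i => w i - t * (s i - ps i)) with (fun i => w i + - t * (s i - ps i))
              by (extensionality x; ring). auto.
          - unfold t; field; auto. }
        pose proof (Hpu_o _ Hw') as E1. pose proof (Hps_o _ Hw') as E2.
        rewrite (sumR_ext _ _ (fun i => ((u i - pu i) * (w i - t * (s i - ps i))
            - c * ((s i - ps i) * (w i - t * (s i - ps i))))
            + t * ((u i - pu i) * (s i - ps i) - c * ((s i - ps i) * (s i - ps i)))))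
          by (intros; ring).
        rewrite sumR_plus, sumR_minus, sumR_scal, sumR_scal, sumR_minus, sumR_scal.
        rewrite E1, E2. fold rr. unfold c. field. fold rr in Hrr. lra.
      * destruct (IHm S' HS' Hv' u) as [p [[Hp Hpm] Ho]].
        exists p. split; auto. intros w Hw. apply Ho. split; auto.
        apply NNPP; intro; apply Hno; exists w; auto.
Qed.

Lemma proj_exists n S u : vsub S -> exists p, is_orth_proj n S u p.
Proof. intros HS. apply (proj_ex_aux n n); auto. intros; lia. Qed.

Lemma proj_spec n S u : vsub S -> is_orth_proj n S u (proj n S u).
Proof. intros HS. unfold proj. apply epsilon_spec. apply proj_exists; auto. Qed.

Lemma SJ_vsub n xs V J : (forall j, In j J -> subspace (V j)) -> vsub (SJ n xs V J).
Proof.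
  intros HV. destruct (HJ_subspace V J HV) as [H0 [Hp Hs]]. split; [|split].
  - exists (fun _ => 0); split; auto.
  - intros w1 w2 [g1 [Hg1 E1]] [g2 [Hg2 E2]]. exists (fun x => g1 x + g2 x); split; auto.
    intros i Hi; rewrite E1, E2; auto.
  - intros a w1 [g1 [Hg1 E1]]. exists (fun x => a * g1 x); split; auto.
    intros i Hi; rewrite E1; auto.
Qed.

Lemma ip_expand D ip g h a : subspace D -> inner_on D ip -> D g -> D h ->
  ip (fun x => g x + a * h x) (fun x => g x + a * h x)
  = ip g g + 2 * a * ip g h + a ^ 2 * ip h h.
Proof.
  intros [H0 [Hp Hs]] [Hsym [Hadd [Hscal Hpos]]] Dg Dh.
  assert (Dah : D (fun x => a * h x)) by auto.
  assert (Dk : D (fun x => g x + a * h x)) by (apply (Hp g (fun x => a * h x)); auto).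
  pose proof (Hadd g (fun x => a * h x) (fun x => g x + a * h x) Dg Dah Dk) as E.
  cbv beta in E. rewrite E.
  rewrite Hscal by auto.
  rewrite (Hsym g _ Dg Dk), (Hsym h _ Dh Dk).
  pose proof (Hadd g (fun x => a * h x) g Dg Dah Dg) as E1.
  pose proof (Hadd g (fun x => a * h x) h Dg Dah Dh) as E2.
  cbv beta in E1, E2. rewrite E1, E2. rewrite !Hscal by auto.
  rewrite (Hsym h g Dh Dg). ring.
Qed.

Lemma ip_cs0 D ip g h : subspace D -> inner_on D ip -> D g -> D h ->
  ip h h = 0 -> ip g h = 0.
Proof.
  intros HD Hi Dg Dh Hhh. destruct (Req_dec (ip g h) 0) as [|Hc]; auto. exfalso.
  pose (t := - (ip g g + 1) / (2 * ip g h)).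
  pose proof (ip_expand D ip g h t HD Hi Dg Dh) as E.
  destruct Hi as [Hsym [Hadd [Hscal Hpos]]]. destruct HD as [H0 [Hp Hs]].
  assert (Dk : D (fun x => g x + t * h x)) by (apply (Hp g (fun x => t * h x)); auto).
  pose proof (Hpos _ Dk) as P. rewrite E, Hhh in P.
  assert (2 * t * ip g h = - (ip g g + 1)) by (unfold t; field; auto).
  lra.
Qed.

Lemma HJ_split V J J0 a b k :
  NoDup J -> NoDup J0 ->
  (forall j, In j (J ++ J0) -> subspace (V j)) ->
  (forall j, In j J -> V j (a j)) -> (forall j, In j J0 -> V j (b j)) ->
  HJ V (J ++ J0) (fun x => fsum (setdiff J0 J) b x + k * fsum J a x).
Proof.
  intros HJ HJ0 HV Ha Hb.
  exists (fun j => if mem j J then (if mem j J0 then (fun x => / 2 * (k * a j x))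
                                    else (fun x => k * a j x)) else b j).
  split.
  - intros j Hj. destruct (mem j J) eqn:E1.
    + apply mem_In in E1. assert (Vk : V j (fun x => k * a j x)) by (apply (HV j Hj); auto).
      destruct (mem j J0); auto. exact (proj2 (proj2 (HV j Hj)) (/2) _ Vk).
    + apply Hb. apply in_app_or in Hj. destruct Hj as [Hj|]; auto.
      apply mem_notIn in E1; contradiction.
  - intros x. unfold fsum, setdiff. rewrite sumR_app, sumR_filter.
    rewrite (sumR_ext J (fun j => (if mem j J then if mem j J0 then fun x0 : Pt => / 2 * (k * a j x0) else fun x0 : Pt => k * a j x0 else b j) x) (fun j => if mem j J0 then / 2 * (k * a j x) else k * a j x)).
    2:{ intros j Hj. cbv beta. assert (mem j J = true) as -> by (apply mem_In; auto). destruct (mem j J0); auto. }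
    rewrite (sumR_ext J0 (fun j => (if mem j J then if mem j J0 then fun x0 : Pt => / 2 * (k * a j x0) else fun x0 : Pt => k * a j x0 else b j) x)
       (fun j => (if mem j J then / 2 * (k * a j x) else 0) + (if negb (mem j J) then b j x else 0))).
    2:{ intros j Hj. cbv beta. assert (mem j J0 = true) as -> by (apply mem_In; auto). destruct (mem j J); simpl; ring. }
    rewrite sumR_plus. rewrite (sumR_swap J0 J (fun j => / 2 * (k * a j x))) by auto.
    assert (E : sumR J (fun j => if mem j J0 then / 2 * (k * a j x) else k * a j x)
               + sumR J (fun j => if mem j J0 then / 2 * (k * a j x) else 0)
               = k * sumR J (fun j => a j x)).
    { rewrite <- sumR_plus, <- sumR_scal. apply sumR_ext; intros j _. destruct (mem j J0); field. }
    lra.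
Qed.

Lemma rho_nonneg q qstar H ip rho : (forall j, (j < q)%nat -> subspace (H j)) ->
  inner_on (HJ H (seq 0 q)) ip -> is_lub (corr_set q qstar H ip) rho -> 0 <= rho.
Proof.
  intros HS Hip Hlub.
  assert (HD : subspace (HJ H (seq 0 q))) by (apply HJ_subspace; intros j Hj; apply HS; apply in_seq in Hj; lia).
  destruct (classic (exists r, corr_set q qstar H ip r)) as [[r Hr]|Hno].
  - pose proof Hr as Hr0.
    destruct Hr as (J1 & J2 & h1 & h2 & I1 & I2 & Dis & L1 & L2 & Hh1 & Hh2 & P1 & P2 & Er).
    destruct I1 as [nd1 q1]. destruct I2 as [nd2 q2].
    assert (D1 : HJ H (seq 0 q) h1) by (apply (HJ_lift H q J1); auto).
    assert (D2 : HJ H (seq 0 q) h2) by (apply (HJ_lift H q J2); auto).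
    assert (Hh2' : HJ H J2 (fun x => -1 * h2 x)).
    { apply (HJ_subspace H J2); auto. }
    assert (D2' : HJ H (seq 0 q) (fun x => -1 * h2 x)) by (apply HD; auto).
    destruct Hip as [Hsym [Hadd [Hscal Hpos]]].
    assert (Ipp : ip (fun x => -1 * h2 x) (fun x => -1 * h2 x) = ip h2 h2).
    { rewrite Hscal by auto. rewrite Hsym by auto. rewrite Hscal by auto. ring. }
    assert (Ip12 : ip h1 (fun x => -1 * h2 x) = - ip h1 h2).
    { rewrite Hsym by auto. rewrite Hscal by auto. rewrite Hsym by auto. ring. }
    assert (Hr' : corr_set q qstar H ip (- r)).
    { exists J1, J2, h1, (fun x => -1 * h2 x). repeat split; auto.
      - rewrite Ipp; auto.
      - rewrite Ipp, Ip12, Er. unfold Rdiv; ring. }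
    pose proof (proj1 Hlub r Hr0). pose proof (proj1 Hlub (-r) Hr'). lra.
  - assert (rho <= rho - 1); [|lra].
    apply (proj2 Hlub). intros x Hx. exfalso; apply Hno; eauto.
Qed.

Theorem proposition5 (q qstar n : nat) (H V : nat -> Fn -> Prop)
  (ip : Fn -> Fn -> R) (f : nat -> Fn) (rho delta : R) (xs : nat -> Pt)
  (J : list nat) (vs : nat -> Fn) :
  (forall j, (j < q)%nat -> subspace (H j)) ->
  inner_on (HJ H (seq 0 q)) ip ->
  (forall j, (j < q)%nat -> H j (f j)) ->
  (length (J0set q ip f) <= qstar)%nat ->
  is_lub (corr_set q qstar H ip) rho ->
  rho < 1 ->
  (forall j, (j < q)%nat ->
     subspace (V j) /\ fin_dim (V j) /\ (forall g, V j g -> H j g)) ->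
  (0 < n)%nat ->
  0 < delta < 1 ->
  idx_set q J -> (length J <= qstar)%nat ->
  setdiff (J0set q ip f) J <> nil ->
  (forall j, In j (J0set q ip f) -> V j (vs j)) ->
  event n xs ip V (J ++ J0set q ip f) delta ->
  let v := fsum (J0set q ip f) vs in
  let e := eval_vec xs v in
  emp_norm2_vec n (PiHat n xs V (J0set q ip f) e)
    - emp_norm2_vec n (PiHat n xs V J e)
    = emp_norm2_vec n (fun i => e i - PiHat n xs V J e i)
  /\ emp_norm2_vec n (fun i => e i - PiHat n xs V J e i)
     >= (1 - delta) / (1 + delta) * (1 - rho ^ 2)
        * emp_norm2_fn n xs (fsum (setdiff (J0set q ip f) J) vs).
Proof.
  intros HHs Hip Hf HJ0len Hlub Hrho HV Hn Hdelta HJi HJlen Hdiff Hvs Hev v e.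
  set (J0 := J0set q ip f) in *.
  assert (HJ0nd : NoDup J0) by (apply NoDup_filter, seq_NoDup).
  assert (HJ0q : forall j, In j J0 -> (j < q)%nat).
  { intros j Hj. unfold J0, J0set in Hj. apply filter_In in Hj. destruct Hj as [Hj _].
    apply in_seq in Hj; lia. }
  destruct HJi as [HJnd HJq].
  assert (HVs : forall j, (j < q)%nat -> subspace (V j)) by (intros j Hj; apply HV; auto).
  assert (HVH : forall j, (j < q)%nat -> forall g, V j g -> H j g) by (intros j Hj; apply HV; auto).
  assert (HS0 : vsub (SJ n xs V J0)) by (apply SJ_vsub; auto).
  assert (HSJ : vsub (SJ n xs V J)) by (apply SJ_vsub; auto).
  assert (HD : subspace (HJ H (seq 0 q))) by (apply HJ_subspace; intros j Hj; apply HHs; apply in_seq in Hj; lia).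
  destruct (proj_spec n (SJ n xs V J0) e HS0) as [HP0 HP0o].
  destruct (proj_spec n (SJ n xs V J) e HSJ) as [HQ HQo].
  change (PiHat n xs V J0 e) with (proj n (SJ n xs V J0) e).
  change (PiHat n xs V J e) with (proj n (SJ n xs V J) e).
  set (P0 := proj n (SJ n xs V J0) e) in *.
  set (Q := proj n (SJ n xs V J) e) in *.
  assert (He0 : SJ n xs V J0 e).
  { exists v. split; [|intros; reflexivity]. exists vs. split; auto. }
  assert (HeP : forall i, In i (seq 0 n) -> e i - P0 i = 0).
  { apply sumR_sq_zero. apply HP0o. apply vsub_minus; auto. }
  assert (Pyth : sumR (seq 0 n) (fun i => e i ^ 2)
     = sumR (seq 0 n) (fun i => (e i - Q i) ^ 2) + 2 * sumR (seq 0 n) (fun i => (e i - Q i) * Q i)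
       + sumR (seq 0 n) (fun i => Q i ^ 2)).
  { rewrite <- sumR_scal, <- !sumR_plus. apply sumR_ext; intros; ring. }
  rewrite (HQo Q HQ) in Pyth.
  split.
  { unfold emp_norm2_vec.
    rewrite (sumR_ext (seq 0 n) (fun i => P0 i ^ 2) (fun i => e i ^ 2)).
    2:{ intros i Hi. specialize (HeP i Hi). replace (P0 i) with (e i) by lra. auto. }
    rewrite Pyth. ring. }
  destruct HQ as [g [[gs [Hgs Eg]] EQ]].
  pose (w := fsum (setdiff J0 J) vs).
  pose (na := fun j => if mem j J0 then (fun x => gs j x - vs j x) else gs j).
  pose (u := fsum J na).
  assert (Hna : forall j, In j J -> V j (na j)).
  { intros j Hj. unfold na. destruct (mem j J0) eqn:E; auto.
    apply mem_In in E. apply sub_minus; auto. }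
  assert (Hdec : forall x, v x - g x = w x + -1 * u x).
  { intros x. rewrite Eg. unfold v, w, u, fsum, setdiff. rewrite sumR_filter.
    rewrite (sumR_ext J (fun j => na j x) (fun j => gs j x - (if mem j J0 then vs j x else 0)))
      by (intros j _; unfold na; destruct (mem j J0); ring).
    rewrite sumR_minus, (sumR_swap J J0 (fun j => vs j x)) by auto.
    assert (sumR J0 (fun j => vs j x) = sumR J0 (fun j => if negb (mem j J) then vs j x else 0)
       + sumR J0 (fun j => if mem j J then vs j x else 0)).
    { rewrite <- sumR_plus. apply sumR_ext; intros; destruct (mem j J); simpl; ring. }
    lra. }
  assert (HEvg : emp_norm2_vec n (fun i => e i - Q i) = emp_norm2_fn n xs (fun x => w x + -1 * u x)).
  { unfold emp_norm2_vec, emp_norm2_fn. f_equal. apply sumR_ext. intros i Hi.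
    apply in_seq in Hi. rewrite EQ by lia. unfold e, eval_vec. rewrite Hdec. auto. }
  assert (HVJJ0 : forall j, In j (J ++ J0) -> subspace (V j)).
  { intros j Hj. apply in_app_or in Hj. apply HVs. destruct Hj; auto. }
  assert (Hvg : HJ V (J ++ J0) (fun x => w x + -1 * u x)).
  { apply (HJ_split V J J0 na vs (-1)); auto. }
  assert (Hw : HJ V (J ++ J0) w).
  { assert (Ew : (fun x => w x + 0 * u x) = w) by (extensionality x; ring).
    rewrite <- Ew. apply (HJ_split V J J0 na vs 0); auto. }
  destruct (Hev _ Hvg) as [Ev1 _]. destruct (Hev _ Hw) as [_ Ev2].
  assert (HSnd : NoDup (setdiff J0 J)) by (apply NoDup_filter; auto).
  assert (HSq : forall j, In j (setdiff J0 J) -> In j J0 /\ ~ In j J).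
  { intros j Hj. unfold setdiff in Hj. apply filter_In in Hj. destruct Hj as [Hj E].
    split; auto. apply mem_notIn. destruct (mem j J); auto. }
  assert (HwH : HJ H (setdiff J0 J) w).
  { exists vs. split; [|intros; reflexivity]. intros j Hj. destruct (HSq j Hj).
    apply (HVH j); auto. }
  assert (HuH : HJ H J u).
  { exists na. split; [|intros; reflexivity]. intros j Hj. apply (HVH j); auto. }
  assert (Dw : HJ H (seq 0 q) w).
  { apply (HJ_lift H q (setdiff J0 J)); auto. intros j Hj; apply HJ0q, HSq; auto. }
  assert (Du : HJ H (seq 0 q) u) by (apply (HJ_lift H q J); auto).
  pose proof (ip_expand _ ip w u (-1) HD Hip Dw Du) as Eexp.
  pose proof (rho_nonneg q qstar H ip rho HHs Hip Hlub) as Hr0.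
  destruct Hip as [Hsym [Hadd [Hscal Hpos]]].
  pose proof (Hpos w Dw) as Pa. pose proof (Hpos u Du) as Pb.
  assert (Key : ip (fun x => w x + -1 * u x) (fun x => w x + -1 * u x) >= (1 - rho ^ 2) * ip w w).
  { rewrite Eexp.
    destruct (Req_dec (ip u u) 0) as [Hb0|Hb0].
    { rewrite (ip_cs0 _ ip w u HD (conj Hsym (conj Hadd (conj Hscal Hpos))) Dw Du Hb0), Hb0.
      nra. }
    destruct (Req_dec (ip w w) 0) as [Ha0|Ha0].
    { rewrite (Hsym w u Dw Du).
      rewrite (ip_cs0 _ ip u w HD (conj Hsym (conj Hadd (conj Hscal Hpos))) Du Dw Ha0), Ha0.
      nra. }
    assert (Hr : corr_set q qstar H ip (ip w u / (sqrt (ip w w) * sqrt (ip u u)))).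
    { exists (setdiff J0 J), J, w, u. repeat split; auto.
      - intros j Hj; apply HJ0q, HSq; auto.
      - intros j Hj; apply HSq; auto.
      - eapply Nat.le_trans; [apply filter_length_le|auto].
      - lra.
      - lra. }
    pose proof (proj1 Hlub _ Hr) as Hle.
    assert (A0 : 0 < sqrt (ip w w)) by (apply sqrt_lt_R0; lra).
    assert (B0 : 0 < sqrt (ip u u)) by (apply sqrt_lt_R0; lra).
    pose proof (sqrt_sqrt (ip w w) Pa) as SA. pose proof (sqrt_sqrt (ip u u) Pb) as SB.
    set (A := sqrt (ip w w)) in *. set (B := sqrt (ip u u)) in *. clearbody A B.
    assert (Hc : ip w u <= rho * (A * B)).
    { apply (Rmult_le_compat_r (A * B)) in Hle; [|nra].
      unfold Rdiv in Hle. rewrite Rmult_assoc, Rinv_l in Hle by nra. lra. }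
    rewrite <- SA, <- SB. assert (0 <= (B - rho * A) ^ 2) by apply pow2_ge_0. nra. }
  rewrite HEvg. unfold w in Ev2.
  assert (K0 : 0 <= (1 - delta) / (1 + delta) * (1 - rho ^ 2)).
  { apply Rmult_le_pos; [apply Rmult_le_pos; [lra| left; apply Rinv_0_lt_compat; lra]| nra]. }
  assert (S1 : (1 - delta) / (1 + delta) * (1 - rho ^ 2) * emp_norm2_fn n xs (fsum (setdiff J0 J) vs)
     <= (1 - delta) / (1 + delta) * (1 - rho ^ 2) * ((1 + delta) * ip w w)).
  { apply Rmult_le_compat_l; auto. }
  assert (S2 : (1 - delta) / (1 + delta) * (1 - rho ^ 2) * ((1 + delta) * ip w w)
     = (1 - delta) * ((1 - rho ^ 2) * ip w w)) by (field; lra).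
  assert (S3 : (1 - delta) * ((1 - rho ^ 2) * ip w w)
     <= (1 - delta) * ip (fun x => w x + -1 * u x) (fun x => w x + -1 * u x)).
  { apply Rmult_le_compat_l; lra. }
  lra.
Qed.
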